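(* Let $L\ge 2$ and let $M_1,\dots,M_L$ be pairwise distinct positive integers. Let $N$ be an integer with $0\le N<\operatorname{lcm}(M_1,\dots,M_L)$, and for $1\le i\le L$ let $r_i\in\{0,\dots,M_i-1\}$ be the remainder of $N$ modulo $M_i$ and $n_i=(N-r_i)/M_i$. Let $\tilde r_1,\dots,\tilde r_L$ be integers with $0\le\tilde r_i\le M_i-1$, and let $\tau_1,\dots,\tau_L\ge0$ with $|\tilde r_i-r_i|\le\tau_i$. Let $k$ be an index with $$\min_{j\ne k}\frac{\gcd(M_k,M_j)}{4}=\max_{1\le i\le L}\min_{j\ne i}\frac{\gcd(M_i,M_j)}{4},$$ and suppose $\tau_k<\min_{j\ne k}\gcd(M_k,M_j)/4$ and, for every $i\ne k$, $$\tau_i\le\frac{\gcd(M_k,M_i)}{2}-\min_{j\ne k}\frac{\gcd(M_k,M_j)}{4}.$$ Then the single-stage algorithm (described in the context) run on the moduli $M_1,\dots,M_L$ with reference index $k$ and inputs $\tilde r_1,\dots,\tilde r_L$ outputs $\hat n_i=n_i$ for all $1\le i\le L$.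
   Context: For $x\in\mathbb R$, $[x]$ denotes the unique integer with $-1/2\le x-[x]<1/2$. Single-stage algorithm: let $P_1,\dots,P_m$ ($m\ge2$) be pairwise distinct positive integers, $k\in\{1,\dots,m\}$ a reference index, and $x_1,\dots,x_m$ integers. For each $i\ne k$ put $m_{ki}=\gcd(P_k,P_i)$, $\Gamma_{ki}=P_k/m_{ki}$, $\Gamma_{ik}=P_i/m_{ki}$, $\hat q_{ik}=[(x_i-x_k)/m_{ki}]$; let $\bar\Gamma_{ki}$ be a multiplicative inverse of $\Gamma_{ki}$ modulo $\Gamma_{ik}$, and let $\hat\xi_{ik}\in\{0,\dots,\Gamma_{ik}-1\}$ with $\hat\xi_{ik}\equiv\hat q_{ik}\bar\Gamma_{ki}\pmod{\Gamma_{ik}}$. Let $\hat n_k$ be the least nonnegative integer $y$ with $y\equiv\hat\xi_{ik}\pmod{\Gamma_{ik}}$ for all $i\ne k$ (if no such $y$ exists the algorithm fails). For $i\ne k$ set $\hat n_i=(\hat n_k\Gamma_{ki}-\hat q_{ik})/\Gamma_{ik}$. Outputs: $\hat n_1,\dots,\hat n_m$ and the estimate $[\frac1m\sum_{i=1}^m(\hat n_iP_i+x_i)]$. *)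

(* Defs.v *)
From HB Require Import structures.
From mathcomp Require Import all_boot all_order all_algebra.
Set Implicit Arguments. Unset Strict Implicit. Unset Printing Implicit Defensive.
Import Order.TTheory GRing.Theory Num.Theory.
Local Open Scope ring_scope.

Definition rnd (x : rat) : int := Num.floor (x + 1 / 2).

Section Alg.
Variables (L : nat) (P : 'I_L -> nat) (k : 'I_L) (x : 'I_L -> int).

Definition m_ (i : 'I_L) : nat := gcdn (P k) (P i).
Definition Gam_k (i : 'I_L) : nat := (P k %/ m_ i)%N.
Definition Gam_i (i : 'I_L) : nat := (P i %/ m_ i)%N.
Definition qhat (i : 'I_L) : int := rnd ((x i - x k)%:~R / (m_ i)%:R).
(* \hat xi_{ik} in {0,..,Gamma_ik - 1}, congruent to qhat * barGamma mod Gamma_ik,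
   for a chosen inverse barGamma i of Gamma_{ki} modulo Gamma_{ik}. *)
Definition xihat (inv : 'I_L -> int) (i : 'I_L) : int :=
  ((qhat i * inv i) %% (Gam_i i)%:Z)%Z.

Definition is_inverse_choice (inv : 'I_L -> int) : Prop :=
  forall i, i != k -> (inv i * (Gam_k i)%:Z = 1 %[mod (Gam_i i)%:Z])%Z.

(* The single-stage algorithm with inverse choice [inv] does not fail and
   outputs nhat_1, ..., nhat_L. *)
Definition single_stage_outputs (inv : 'I_L -> int) (nhat : 'I_L -> int) : Prop :=
  [/\ 0 <= nhat k,
      (forall i, i != k -> (nhat k = xihat inv i %[mod (Gam_i i)%:Z])%Z),
      (forall y : int, 0 <= y ->
         (forall i, i != k -> (y = xihat inv i %[mod (Gam_i i)%:Z])%Z) ->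
         nhat k <= y)
    & (forall i, i != k ->
         (nhat i)%:~R = (nhat k * (Gam_k i)%:Z - qhat i)%:~R / (Gam_i i)%:R :> rat)].
End Alg.

(* min_{j <> i} gcd(M_i, M_j) (the neutral element M_i is an upper bound of every
   term, so for L >= 2 this is the genuine minimum) *)
Definition gmin (L : nat) (M : 'I_L -> nat) (i : 'I_L) : nat :=
  \big[minn/M i]_(j < L | j != i) gcdn (M i) (M j).

(* Main.v *)
Require Import Defs.
From HB Require Import structures.
From mathcomp Require Import all_boot all_order all_algebra.
From mathcomp Require Import zify ring lra.
Import Order.TTheory GRing.Theory Num.Theory.
Local Open Scope ring_scope.

Lemma nE (N d : nat) : (0 < d)%N -> ((N - N %% d) %/ d = N %/ d)%N.
Proof. move=> d0; by rewrite {1}(divn_eq N d) addnK mulnK. Qed.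

Lemma rnd_shift (q d : int) (m : nat) : (0 < m)%N -> 2 * `|d| < m%:Z ->
  rnd ((m%:Z * q + d)%:~R / m%:R) = q.
Proof.
move=> m0 hd; rewrite /rnd; apply/eqP; rewrite floor_eq.
have mp : 0 < (m%:R : rat) by rewrite ltr0n.
set t := (d%:~R : rat) / m%:R.
have -> : ((m%:Z * q + d)%:~R : rat) / m%:R = q%:~R + t.
  rewrite /t rmorphD rmorphM /= mulrDl; congr (_ + _).
  rewrite -mulrA mulrC -mulrA; change ((Posz m)%:~R : rat) with (m%:R : rat).
  by rewrite mulVf ?mulr1 // gt_eqF.
have ht : `|t| < 1 / 2.
  rewrite /t normrM normfV (gtr0_norm mp) ltr_pdivrMr //.
  have : ((2 * `|d|)%:~R : rat) < (m%:Z)%:~R by rewrite ltr_int.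
  rewrite rmorphM /= intr_norm => h.
  have e1 : ((Posz m)%:~R : rat) = m%:R by [].
  have e2 : ((2:int)%:~R : rat) = 2 by [].
  rewrite e1 e2 in h. lra.
move: ht; rewrite ltr_norml => /andP [h1 h2].
rewrite rmorphD /=; apply/andP; split; lra.
Qed.
Theorem corollary3 (R : realFieldType) (L : nat) (M : 'I_L -> nat) (N : nat)
    (rt : 'I_L -> int) (tau : 'I_L -> R) (k : 'I_L) :
  (2 <= L)%N ->
  (forall i, 0 < M i)%N ->
  injective M ->
  (N < \big[lcmn/1]_(i < L) M i)%N ->
  (forall i, 0 <= rt i <= (M i)%:Z - 1) ->
  (forall i, 0 <= tau i) ->
  (forall i, `|rt i - (N %% M i)%:Z|%:~R <= tau i) ->
  gmin M k = (\max_(i < L) gmin M i)%N ->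
  tau k < (gmin M k)%:R / 4 ->
  (forall i, i != k -> tau i <= (gcdn (M k) (M i))%:R / 2 - (gmin M k)%:R / 4) ->
  forall inv : 'I_L -> int, is_inverse_choice M k inv ->
  single_stage_outputs M k rt inv (fun i => ((N - N %% M i) %/ M i)%N%:Z).
Proof.
move=> hL Mpos Minj hN hrt htau herr hmax htauk htaui inv hinv.
have nE' i : ((N - N %% M i) %/ M i)%N = (N %/ M i)%N by apply: nE.
set n := fun i => (N %/ M i)%N.
have mpos i : (0 < m_ M k i)%N by rewrite /m_ gcdn_gt0 Mpos.
have hMk i : M k = (Gam_k M k i * m_ M k i)%N.
  by rewrite /Gam_k divnK // /m_ dvdn_gcdl.
have hMi i : M i = (Gam_i M k i * m_ M k i)%N.
  by rewrite /Gam_i divnK // /m_ dvdn_gcdr.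
have Gipos i : (0 < Gam_i M k i)%N.
  by move: (Mpos i); rewrite (hMi i) muln_gt0 => /andP [].
have hA i : i != k ->
  qhat M k rt i = (n k * Gam_k M k i)%N%:Z - (n i * Gam_i M k i)%N%:Z.
  move=> ik.
  set m := m_ M k i; set Gk := Gam_k M k i; set Gi := Gam_i M k i.
  set d := (rt i - (N %% M i)%:Z) - (rt k - (N %% M k)%:Z).
  have Ni := divn_eq N (M i); have Nk := divn_eq N (M k).
  rewrite {2}(hMi i) in Ni; rewrite {2}(hMk i) in Nk.
  move/(congr1 Posz): Ni; move/(congr1 Posz): Nk.
  rewrite !PoszD !PoszM => Nk Ni.
  have ri : (N %% M i)%:Z = N%:Z - (n i)%:Z * (Gi%:Z * m%:Z) by rewrite Ni; ring.
  have rk : (N %% M k)%:Z = N%:Z - (n k)%:Z * (Gk%:Z * m%:Z) by rewrite Nk; ring.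
  have e : rt i - rt k =
     m%:Z * ((n k * Gk)%N%:Z - (n i * Gi)%N%:Z) + d.
    by rewrite /d ri rk !PoszM; ring.
  rewrite /qhat e; apply: rnd_shift; first exact: mpos.
  have h1 := herr i; have h2 := herr k; have h3 := htaui i ik.
  have h4 : (`|d|%:~R : R) <= `|rt i - (N %% M i)%:Z|%:~R + `|rt k - (N %% M k)%:Z|%:~R.
    by rewrite -rmorphD ler_int ler_normB.
  rewrite -(ltr_int R) rmorphM /=.
  have e1 : ((Posz m)%:~R : R) = (gcdn (M k) (M i))%:R by [].
  have e2 : ((2:int)%:~R : R) = 2 by [].
  rewrite e1 e2. lra.
have hB i : i != k -> ((n k)%:Z = xihat M k rt inv i %[mod (Gam_i M k i)%:Z])%Z.
  move=> ik; rewrite /xihat modz_mod; apply/eqP; rewrite eqz_mod_dvd hA //.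
  have -> : (n k)%:Z - ((n k * Gam_k M k i)%N%:Z - (n i * Gam_i M k i)%N%:Z) * inv i
     = (n k)%:Z * (1 - inv i * (Gam_k M k i)%:Z) + (inv i * (n i)%:Z) * (Gam_i M k i)%:Z.
    by rewrite !PoszM; ring.
  apply: rpredD; last exact: dvdz_mull (dvdzz _).
  apply: dvdz_mull; move: (hinv i ik) => /eqP; rewrite eqz_mod_dvd.
  by rewrite -opprB rpredN.
rewrite /single_stage_outputs /=; split.
- by [].
- by move=> i ik; rewrite nE'; apply: hB.
- case=> [y' _ hy|//]; rewrite nE' lez_nat.
  case: (leqP (n k) y') => // hlt; exfalso.
  set D := (n k - y')%N.
  have hdiv i : i != k -> (Gam_i M k i %| D)%N.
    move=> ik; have := hy i ik; rewrite -(hB i ik) => /eqP.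
    rewrite eqz_mod_dvd -opprB subzn ?(ltnW hlt) // rpredN dvdzE.
    by [].
  have hl : (\big[lcmn/1%N]_(i < L) M i %| M k * D)%N.
    apply/dvdn_biglcmP => i _; case: (eqVneq i k) => [->|ik].
      exact: dvdn_mulr (dvdnn _).
    rewrite mulnC [M i](hMi i) [M k](hMk i); apply: dvdn_mul; first exact: hdiv.
    exact: dvdn_mull (dvdnn _).
  have := dvdn_leq _ hl; rewrite muln_gt0 Mpos subn_gt0 hlt => /(_ isT) h1.
  have h2 : (M k * D <= N)%N.
    apply: leq_trans (leq_divM N (M k)).
    by rewrite mulnC leq_mul2r leq_subr orbT.
  by have := leq_ltn_trans (leq_trans h1 h2) hN; rewrite ltnn.
- move=> i ik; rewrite !nE' hA //.
  have -> : (n k)%:Z * (Gam_k M k i)%:Z - ((n k * Gam_k M k i)%N%:Z - (n i * Gam_i M k i)%N%:Z)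
     = (n i)%:Z * (Gam_i M k i)%:Z by rewrite !PoszM; ring.
  rewrite rmorphM /=.
  change (((Gam_i M k i)%:Z)%:~R : rat) with ((Gam_i M k i)%:R : rat).
  by rewrite mulfK // pnatr_eq0 -lt0n Gipos.
Qed.
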